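(* For every integer $n\geq 3$, the shortest binary word that has $n$ distinct factorizations in two Lyndon words is the word $00(10)^{n-2}11$, which has length $2n$.
   Context: Words are over the alphabet $\{0,1\}$ with the lexicographic order induced by $0<1$. A Lyndon word is a nonempty primitive word that is lexicographically strictly smaller than all of its other rotations (conjugates) (equivalently, strictly smaller than all its nonempty proper suffixes). A factorization of a word $u$ in two Lyndon words is a pair $(x,y)$ of Lyndon words (both nonempty) with $u=xy$; two such factorizations are distinct if the pairs differ. ''The shortest'' means that this word has $n$ distinct such factorizations, and every other binary word with (at least) $n$ distinct such factorizations is strictly longer. *)

(* Defs.v *)
From mathcomp Require Import all_boot.
Set Implicit Arguments. Unset Strict Implicit. Unset Printing Implicit Defensive.

(* Binary words: seq bool, with letter 0 = false, letter 1 = true (so 0 < 1). *)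

Fixpoint lexlt (s t : seq bool) : bool :=
  match s, t with
  | [::], _ :: _ => true
  | _, [::] => false
  | a :: s', b :: t' => (~~ a && b) || ((a == b) && lexlt s' t')
  end.

Definition primitive (w : seq bool) : Prop :=
  forall (u : seq bool) (m : nat), 1 < m -> w <> flatten (nseq m u).

Definition lyndon (w : seq bool) : Prop :=
  w <> [::] /\ primitive w /\
  forall k, 0 < k < size w -> lexlt w (rot k w).

Definition lyndon_fact (u : seq bool) (p : seq bool * seq bool) : Prop :=
  u = p.1 ++ p.2 /\ lyndon p.1 /\ lyndon p.2.

Definition has_n_fact (u : seq bool) (n : nat) : Prop :=
  exists l : seq (seq bool * seq bool),
    [/\ uniq l, size l = n & forall p, lyndon_fact u p <-> p \in l].

Definition has_atleast_n_fact (u : seq bool) (n : nat) : Prop :=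
  exists l : seq (seq bool * seq bool),
    [/\ uniq l, size l = n & forall p, p \in l -> lyndon_fact u p].

Definition wordn (n : nat) : seq bool :=
  [:: false; false] ++ flatten (nseq (n - 2) [:: true; false]) ++ [:: true; true].

(* Main.v *)
Require Import Defs.
From mathcomp Require Import all_boot zify.
Ltac blia := first [lia | (apply/idP/idP => ?; lia)].

Lemma lexlt_irr s : lexlt s s = false.
Proof. elim: s => //= a s ->. by case: a. Qed.

Lemma lexlt_asym s t : lexlt s t -> lexlt t s -> False.
Proof.
elim: s t => [|a s IH] [|b t] //=.
by case: a; case: b => //=; apply: IH.
Qed.

Lemma lexlt_nth p s t : p < size s -> p < size t ->
  (forall i, i < p -> nth false s i = nth false t i) ->
  nth false s p = false -> nth false t p = true -> lexlt s t.
Proof.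
elim: p s t => [|p IH] [|a s] [|b t] //= Hs Ht Heq.
- by move=> -> ->.
- move=> H1 H2. have := Heq 0 erefl => /= ->.
  rewrite eqxx /= orbC IH //. move=> i Hi; exact: (Heq i.+1).
Qed.

Lemma lexlt_head s t : nth false s 0 = true -> nth false t 0 = false -> lexlt s t = false.
Proof. by case: s => [|a s] //= ->; case: t => [|b t] //= ->. Qed.

Lemma flatten_nseq_comm m (u : seq bool) :
  flatten (nseq m u) ++ u = u ++ flatten (nseq m u).
Proof. elim: m => [|m IH] /=; first by rewrite cats0. by rewrite -catA IH. Qed.

Lemma rot1_nseq L (b : bool) : rot 1 (nseq L b) = nseq L b.
Proof.
case: L => // l. rewrite /= rot1_cons.
elim: l => //= l IH. by rewrite IH.
Qed.

Lemma nth_rot k (w : seq bool) i : i + k < size w ->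
  nth false (rot k w) i = nth false w (i + k).
Proof.
move=> H. rewrite /rot nth_cat size_drop ifT; last by lia.
by rewrite nth_drop addnC.
Qed.

Lemma lyndon_crit w : w <> [::] ->
  (forall k, 0 < k < size w -> exists p, [/\ p + k < size w,
     forall i, i < p -> nth false w i = nth false w (i + k),
     nth false w p = false & nth false w (p + k) = true]) -> lyndon w.
Proof.
move=> Hne Hc.
have Hrot : forall k, 0 < k < size w -> lexlt w (rot k w).
  move=> k Hk. have [p [Hp Hi Hf Ht]] := Hc k Hk.
  apply: (@lexlt_nth p); rewrite ?size_rot; try lia.
  - move=> i Hip. rewrite nth_rot; last by lia. exact: Hi.
  - by rewrite nth_rot.
split=> //; split=> // u m Hm Hw.
case: m Hm Hw => // m Hm Hw.
have Hu : u <> [::].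
  move=> Hu; apply: Hne; rewrite Hw Hu. by elim: m {Hm Hw} => //= m ->.
have Hr : rot (size u) w = w.
  by rewrite Hw /= rot_size_cat flatten_nseq_comm.
have Hsz : 0 < size u < size w.
  rewrite Hw /= size_cat; case: m Hm {Hw Hr} => // m _ /=.
  rewrite size_cat. case: u Hu => //= ? ? _. lia.
have := Hrot _ Hsz. by rewrite Hr lexlt_irr.
Qed.

Lemma lyndon_ends w : lyndon w -> 1 < size w ->
  nth false w 0 = false /\ nth false w (size w).-1 = true.
Proof.
move=> [Hne [Hprim Hrot]] Hs.
have Hhead : nth false w 0 = false.
  case Hw0: (nth false w 0) => //.
  case Hin: (false \in w); last first.
    have Hall : all (pred1 true) w.
      apply/allP => x Hx /=. case: x Hx => //. by rewrite Hin.
    move/all_pred1P: Hall => Hw.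
    have := Hrot 1. rewrite Hw rot1_nseq size_nseq lexlt_irr. move=> H. have Hs1 : 0 < 1 < size w by lia. by have := H Hs1.
  set k := index false w.
  have Hk : k < size w by rewrite index_mem.
  have Hk0 : 0 < k.
    case: (posnP k) => // Hk0. have := nth_index false Hin. rewrite -/k Hk0 Hw0. done.
  have := Hrot k. rewrite Hk0 Hk => /(_ erefl).
  have Hr0 : nth false (rot k w) 0 = false by rewrite nth_rot ?add0n ?nth_index.
  by rewrite lexlt_head.
split=> //.
case Hl: (nth false w (size w).-1) => //.
case Hin: (true \in w); last first.
  have Hall : all (pred1 false) w.
    apply/allP => x Hx /=. case: x Hx => //. by rewrite Hin.
  move/all_pred1P: Hall => Hw.
  have := Hrot 1. rewrite Hw rot1_nseq size_nseq lexlt_irr. move=> H. have Hs1 : 0 < 1 < size w by lia. by have := H Hs1.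
set r := index true w.
have Hr : r < size w by rewrite index_mem.
have Hbef : forall i, i < r -> nth false w i = false.
  move=> i Hi. have := before_find false Hi. rewrite /=. by case: (nth false w i).
have Hr0 : 0 < r.
  case: (posnP r) => // Hr0. have := nth_index false Hin. rewrite -/r Hr0 Hhead. done.
have Hlt : lexlt (rot (size w).-1 w) w.
  have Hnr : forall i, 0 < i < size w -> nth false (rot (size w).-1 w) i = nth false w i.-1.
    move=> i Hi. rewrite /rot nth_cat size_drop ifF; last by lia.
    rewrite nth_take; last by lia. f_equal. lia.
  apply: (@lexlt_nth r); rewrite ?size_rot //.
  - move=> i Hi. case: i Hi => [|i] Hi.
      rewrite Hbef // /rot nth_cat size_drop ifT; last by lia.
      by rewrite nth_drop addn0.
    rewrite Hnr; last by lia. rewrite /= !Hbef //; lia.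
  - rewrite Hnr; last by lia. apply: Hbef. lia.
  - by rewrite nth_index.
have Hk : 0 < (size w).-1 < size w by lia.
have := Hrot _ Hk. move=> H. by case: (@lexlt_asym _ _ H Hlt).
Qed.

Definition fw (n i : nat) : bool := (i != 0) && ((i == 2*n-1) || (i %% 2 == 0)).

Lemma flat_size m : size (flatten (nseq m [:: true; false])) = 2 * m.
Proof. elim: m => //= m ->. lia. Qed.

Lemma flat_nth m j : j < 2 * m ->
  nth false (flatten (nseq m [:: true; false])) j = (j %% 2 == 0).
Proof.
elim: m j => [|m IH] [|[|j]] //= Hj.
rewrite IH; last by lia.
apply/idP/idP; move=> H; lia.
Qed.

Lemma size_wordn n : 2 <= n -> size (wordn n) = 2 * n.
Proof. move=> Hn. rewrite /wordn !size_cat flat_size /=. lia. Qed.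

Lemma nth_wordn n i : 2 <= n -> i < 2 * n -> nth false (wordn n) i = fw n i.
Proof.
move=> Hn Hi. rewrite /wordn /fw.
case: i Hi => [|[|i]] Hi //=.
  apply/idP/idP => H; lia.
rewrite nth_cat flat_size.
case: ifP => H.
  rewrite flat_nth //. apply/idP/idP => H'; lia.
rewrite /=. case E: (i - 2 * (n - 2)) => [|[|k]] /=; try (apply/idP/idP => H'; lia).

Qed.

Lemma cuts_bound L (s : seq nat) : uniq s -> (forall x, x \in s -> 0 < x < L) ->
  (forall x, x \in s -> x.+1 \notin s) ->
  2 * size s <= L /\ (2 * size s = L -> forall i, i %% 2 = 1 -> i < L -> i \in s).
Proof.
elim/ltn_ind: L s => L IH s Hu Hr Hna.
case: (ltnP L 2) => HL.
  case: s Hu Hr Hna => [|x s] Hu Hr Hna.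
    split=> // E i Hi HiL. lia.
  have := Hr x (mem_head _ _). lia.
case Hin: ((L.-1) \in s).
  set s' := rem L.-1 s.
  have Hs' : forall x, x \in s' -> 0 < x < L.-2.
    move=> x Hx. move: Hx; rewrite /s' (mem_rem_uniq _ Hu) inE => /andP [Hx1 Hx2].
    have := Hr x Hx2. have := Hna x Hx2.
    case E: (x == L.-2); first by move/eqP: E => ->; rewrite (_ : (L.-2).+1 = L.-1) ?Hin //; lia.
    move=> _ H. lia.
  have Hu' : uniq s' by rewrite rem_uniq.
  have Hna' : forall x, x \in s' -> x.+1 \notin s'.
    move=> x Hx. move: Hx; rewrite /s' !(mem_rem_uniq _ Hu) !inE => /andP [_ Hx].
    by rewrite (negbTE (Hna x Hx)) andbF.
  have [IH1 IH2] := IH L.-2 ltac:(lia) s' Hu' Hs' Hna'.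
  have Hsz : size s' = (size s).-1 by rewrite size_rem.
  have Hpos : 0 < size s by case: (s) Hin.
  rewrite Hsz in IH1 IH2.
  split; first lia.
  move=> E i Hi HiL.
  case: (ltnP i L.-2) => Hi2.
    have : i \in s' by apply: IH2 => //; lia.
    by rewrite /s' (mem_rem_uniq _ Hu) inE => /andP [].
  have -> : i = L.-1 by lia.
  done.
have Hs2 : forall x, x \in s -> 0 < x < L.-1.
  move=> x Hx. have := Hr x Hx. case E: (x == L.-1); first by move/eqP: E Hx => -> ; rewrite Hin.
  move=> H; lia.
have [IH1 IH2] := IH L.-1 ltac:(lia) s Hu Hs2 Hna.
split; first lia. move=> E. lia.
Qed.

Lemma lyndon_take_wordn n c : 2 <= n -> c %% 2 = 1 -> c < 2 * n ->
  lyndon (take c (wordn n)).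
Proof.
move=> Hn Hc HcL.
have Hsz : size (take c (wordn n)) = c by rewrite size_takel // (size_wordn n Hn); lia.
apply: lyndon_crit.
  move=> H; move: Hsz; rewrite H /=; lia.
rewrite Hsz => k Hk.
have Hnt : forall i, i < c -> nth false (take c (wordn n)) i = fw n i.
  move=> i Hi. rewrite nth_take // nth_wordn //; lia.
case Hf: (fw n k).
  exists 0; split; rewrite ?add0n ?Hnt //; try lia.
exists 1; move: Hf; rewrite /fw => Hf.
split; first lia.
- move=> i Hi. have -> : i = 0 by lia. rewrite (Hnt 0) ?(Hnt (0+k)) /fw; blia.
- rewrite Hnt /fw; [blia|lia].
- rewrite Hnt /fw; [blia|lia].
Qed.

Lemma lyndon_drop_wordn n c : 2 <= n -> c %% 2 = 1 -> c < 2 * n ->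
  lyndon (drop c (wordn n)).
Proof.
move=> Hn Hc HcL.
have Hsz : size (drop c (wordn n)) = 2 * n - c by rewrite size_drop (size_wordn n Hn).
apply: lyndon_crit.
  move=> H; move: Hsz; rewrite H /=; lia.
rewrite Hsz => j Hj.
have Hnt : forall i, i < 2 * n - c -> nth false (drop c (wordn n)) i = fw n (c + i).
  move=> i Hi. rewrite nth_drop nth_wordn //; lia.
case Hf: (fw n (c + j)).
  exists 0; split; rewrite ?add0n ?Hnt //; try lia.
  rewrite /fw. blia.
exists (2 * n - 1 - c - j); move: Hf; rewrite /fw => Hf.
split; first lia.
- move=> i Hi. rewrite (Hnt i) ?(Hnt (i+j)) /fw; blia.
- rewrite Hnt /fw; [blia|lia].
- rewrite Hnt /fw; [blia|lia].
Qed.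

Lemma fact_split u p : lyndon_fact u p -> p = (take (size p.1) u, drop (size p.1) u).
Proof.
case: p => x y [/= -> _]. by rewrite take_size_cat // drop_size_cat.
Qed.

Lemma lyndon_ne w : lyndon w -> 0 < size w.
Proof. case: w => // [[]] //. Qed.

Arguments fact_split {u p}.
Arguments lyndon_ne {w}.
Arguments lyndon_ends {w}.
Arguments cuts_bound {L s}.

Theorem mainTheorem3 (n : nat) : 3 <= n ->
  [/\ has_n_fact (wordn n) n,
      size (wordn n) = 2 * n
    & forall u : seq bool, has_atleast_n_fact u n -> u <> wordn n ->
        size (wordn n) < size u].
Proof.
move=> Hn3. have Hn : 2 <= n by lia.
have Hsw := size_wordn n Hn.
split => //.
- pose f k := (take (2 * k + 1) (wordn n), drop (2 * k + 1) (wordn n)).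
  exists (map f (iota 0 n)); split.
  + rewrite map_inj_in_uniq ?iota_uniq // => a b Ha Hb [E _].
    move: E => /(congr1 size). rewrite !size_takel ?Hsw; move: Ha Hb; rewrite !mem_iota; lia.
  + by rewrite size_map size_iota.
  + move=> p; split.
    * move=> Hp. have Ep := fact_split Hp.
      case: Hp => Hu [Hx Hy].
      have Hx0 := lyndon_ne Hx. have Hy0 := lyndon_ne Hy.
      have Hc : size p.1 + size p.2 = 2 * n by rewrite -size_cat -Hu.
      set c := size p.1 in Ep Hc Hx0.
      have Hodd : c %% 2 = 1.
        case: (ltnP c 2) => Hc2; first lia.
        apply/eqP; apply: contraT => Hev.
        have := lyndon_ends Hx. rewrite -/c => /(_ Hc2) [_].
        rewrite Ep /= nth_take; last lia.
        rewrite nth_wordn //; last lia. rewrite /fw. lia.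
      apply/mapP; exists (c %/ 2); first by rewrite mem_iota; lia.
      rewrite Ep /f. congr (take _ _, drop _ _); lia.
    * move=> /mapP [k Hk ->]. move: Hk; rewrite mem_iota => Hk.
      split; first by rewrite /= cat_take_drop.
      split; [apply: lyndon_take_wordn | apply: lyndon_drop_wordn] => //; lia.
- move=> u [l [Hul Hsl Hl]] Hne.
  rewrite Hsw. case: (ltnP (2 * n) (size u)) => // HL. exfalso.
  set L := size u in HL. have EL : size u = L by []. clearbody L.
  set s := map (fun p => size p.1) l.
  have Hmem : forall x, x \in s -> exists p, [/\ p \in l, x = size p.1 & lyndon_fact u p].
    move=> x /mapP [p Hp ->]. exists p; split => //. exact: Hl.
  have Hcut : forall x, x \in s -> lyndon (take x u) /\ lyndon (drop x u).
    move=> x /Hmem [p [Hp -> Hf]]. have Ep := fact_split Hf.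
    case: Hf => _ [Hx Hy]. by rewrite Ep in Hx Hy.
  have Hrange : forall x, x \in s -> 0 < x < L.
    move=> x /Hmem [p [Hp -> Hf]]. have Ep := fact_split Hf.
    case: Hf => Hu [Hx Hy].
    have := lyndon_ne Hx; have := lyndon_ne Hy.
    rewrite -EL Hu size_cat. set a := size p.1. set b := size p.2. lia.
  have Hus : uniq s.
    rewrite map_inj_in_uniq // => p q Hp Hq E.
    by rewrite (fact_split (Hl p Hp)) (fact_split (Hl q Hq)) E.
  have Hna : forall x, x \in s -> x.+1 \notin s.
    move=> x Hx. apply/negP => Hx1.
    have [_ Hd] := Hcut x Hx. have [Ht _] := Hcut x.+1 Hx1.
    have := Hrange x.+1 Hx1 => Hr1.
    have := Hrange x Hx => Hr0.
    have Hst : size (take x.+1 u) = x.+1 by rewrite size_takel // EL; lia.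
    have Hsd : size (drop x u) = L - x by rewrite size_drop EL.
    have [_ H1] := lyndon_ends Ht ltac:(lia).
    have [H2 _] := lyndon_ends Hd ltac:(lia).
    move: H1 H2. rewrite Hst /= nth_take // nth_drop addn0 => ->. done.
  have [B1 B2] := cuts_bound Hus Hrange Hna.
  have Hss : size s = n by rewrite size_map.
  rewrite Hss in B1 B2.
  have HL2 : L = 2 * n by lia.
  have Hall := B2 (esym HL2).
  have Hc : forall i, i %% 2 = 1 -> i < 2 * n -> lyndon (take i u) /\ lyndon (drop i u).
    move=> i Hi Hi2. apply: Hcut. apply: Hall => //. lia.
  apply: Hne. apply: (@eq_from_nth _ false); first by rewrite Hsw EL HL2.
  move=> i Hi. rewrite EL HL2 in Hi. rewrite nth_wordn //.
  have Hsu : size u = 2 * n by rewrite EL HL2.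
  case: (posnP i) => [->|Hi0].
    have [Ht _] := Hc (2 * n - 1) ltac:(lia) ltac:(lia).
    have Hst : size (take (2 * n - 1) u) = 2 * n - 1 by rewrite size_takel; lia.
    have [H1 _] := lyndon_ends Ht ltac:(lia).
    by move: H1; rewrite nth_take //; lia.
  case: (eqVneq i (2 * n - 1)) => [->|Hi1].
    have [_ Hd] := Hc 1 erefl ltac:(lia).
    have Hsd : size (drop 1 u) = 2 * n - 1 by rewrite size_drop Hsu.
    have [_ H1] := lyndon_ends Hd ltac:(lia).
    move: H1; rewrite Hsd nth_drop (_ : 1 + (2 * n - 1).-1 = 2 * n - 1); last lia.
    move=> ->. rewrite /fw. lia.
  case: (eqVneq (i %% 2) 0) => Hpar.
    have [Ht _] := Hc (i.+1) ltac:(lia) ltac:(lia).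
    have Hst : size (take i.+1 u) = i.+1 by rewrite size_takel; lia.
    have [_ H1] := lyndon_ends Ht ltac:(lia).
    move: H1; rewrite Hst /= nth_take //. move=> ->. rewrite /fw. lia.
  have [_ Hd] := Hc i ltac:(lia) ltac:(lia).
  have Hsd : size (drop i u) = 2 * n - i by rewrite size_drop Hsu.
  have [H1 _] := lyndon_ends Hd ltac:(lia).
  move: H1; rewrite nth_drop addn0 => ->. rewrite /fw. lia.
Qed.
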